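(* The map $\iota:S^2_+\to E(S^1)$, $p\mapsto f_p$, where $f_p(x)=d(p,x)$ for $x\in S^1$, is an isometric embedding. Moreover, $\iota(S^2_+)$ is the only subset of $E(S^1)$ that is isometric to $S^2_+$.
   Context: $S^2_+=\{(x,y,z)\in\mathbb{R}^3:x^2+y^2+z^2=1,\ z\ge0\}$ carries its intrinsic (geodesic) metric $d$. $S^1$ is its boundary circle $\{z=0\}$ with the restricted metric, which is the intrinsic metric of the circle of length $2\pi$. $E(S^1)$ is the set of $1$-Lipschitz functions $f:S^1\to\mathbb{R}$ such that $d(x,y)\le f(x)+f(y)$ for all $x,y\in S^1$ and, for each $x$, there is $y$ with $f(x)+f(y)=d(x,y)$. It is equipped with the sup norm $\|\cdot\|_\infty$. *)

(* Defs.v *)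
From Stdlib Require Import Reals.
Open Scope R_scope.

Definition pt : Type := (R * R * R)%type.

Definition dot (p q : pt) : R :=
  let '(x1, y1, z1) := p in let '(x2, y2, z2) := q in x1 * x2 + y1 * y2 + z1 * z2.

Definition zc (p : pt) : R := let '(_, _, z) := p in z.

Definition in_S2p (p : pt) : Prop := dot p p = 1 /\ 0 <= zc p.
Definition in_S1 (p : pt) : Prop := dot p p = 1 /\ zc p = 0.

Definition S2p : Type := {p : pt | in_S2p p}.
Definition S1 : Type := {x : pt | in_S1 x}.

(* This is the intrinsic metric of S^2_+ (the closed
   hemisphere is geodesically convex) and restricted to S^1 it is the
   intrinsic metric of the circle of length 2*pi. *)
Definition gdist (p q : pt) : R := acos (dot p q).

Definition dS2p (p q : S2p) : R := gdist (proj1_sig p) (proj1_sig q).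
Definition dS1 (x y : S1) : R := gdist (proj1_sig x) (proj1_sig y).

Definition in_E (f : S1 -> R) : Prop :=
  (forall x y : S1, Rabs (f x - f y) <= dS1 x y) /\
  (forall x y : S1, dS1 x y <= f x + f y) /\
  (forall x : S1, exists y : S1, f x + f y = dS1 x y).

Definition sup_dist (f g : S1 -> R) (r : R) : Prop :=
  is_lub (fun t => exists x : S1, t = Rabs (f x - g x)) r.

Definition iota (p : S2p) : S1 -> R := fun x => gdist (proj1_sig p) (proj1_sig x).

Definition isometric_to_S2p (A : (S1 -> R) -> Prop) : Prop :=
  exists phi : S2p -> (S1 -> R),
    (forall p, A (phi p)) /\
    (forall g, A g -> exists p, phi p = g) /\
    (forall p q, sup_dist (phi p) (phi q) (dS2p p q)).

(* Main.v *)
Require Import Defs.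
From Stdlib Require Import Reals Psatz Lra FunctionalExtensionality ProofIrrelevance.
Open Scope R_scope.


Lemma sqn x : 0 <= x * x.
Proof. pose proof (Rle_0_sqr x). unfold Rsqr in H. lra. Qed.

Lemma acos_dec x y : -1 <= x -> x <= y -> y <= 1 -> acos y <= acos x.
Proof.
  intros H1 H2 H3.
  destruct (Rle_or_lt (acos y) (acos x)) as [H|H]; auto.
  pose proof (acos_bound x); pose proof (acos_bound y).
  pose proof (cos_decreasing_1 (acos x) (acos y) ltac:(lra) ltac:(lra) ltac:(lra) ltac:(lra) H) as C.
  rewrite !cos_acos in C by lra. lra.
Qed.

Lemma acos_inj x y : -1 <= x <= 1 -> -1 <= y <= 1 -> acos x = acos y -> x = y.
Proof.
  intros Hx Hy E. rewrite <- (cos_acos x Hx), <- (cos_acos y Hy), E. reflexivity.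
Qed.

Lemma acos_le_of_cos t c : 0 <= t <= PI -> -1 <= c <= 1 -> cos t <= c -> acos c <= t.
Proof.
  intros Ht Hc H. rewrite <- (acos_cos t Ht).
  pose proof (COS_bound t). apply acos_dec; lra.
Qed.

Lemma le_sqrt_of_sq x S : 0 <= S -> x * x <= S -> x <= sqrt S.
Proof.
  intros HS H. pose proof (sqrt_sqrt S HS). pose proof (sqrt_pos S).
  destruct (Rle_or_lt x (sqrt S)); auto. nra.
Qed.

Lemma dot_sym p q : dot p q = dot q p.
Proof. destruct p as [[p1 p2] p3]; destruct q as [[q1 q2] q3]; simpl; ring. Qed.

Lemma dot_bound p q : dot p p = 1 -> dot q q = 1 -> -1 <= dot p q <= 1.
Proof.
  destruct p as [[p1 p2] p3]; destruct q as [[q1 q2] q3]; simpl; intros Hp Hq.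
  pose proof (sqn (p1+q1)); pose proof (sqn (p2+q2)); pose proof (sqn (p3+q3)).
  pose proof (sqn (p1-q1)); pose proof (sqn (p2-q2)); pose proof (sqn (p3-q3)).
  split; nra.
Qed.

Lemma gdist_sym p q : gdist p q = gdist q p.
Proof. unfold gdist; rewrite dot_sym; reflexivity. Qed.

Lemma cs3 x1 x2 x3 y1 y2 y3 :
  (x1*y1+x2*y2+x3*y3) * (x1*y1+x2*y2+x3*y3) <= (x1*x1+x2*x2+x3*x3)*(y1*y1+y2*y2+y3*y3).
Proof.
  assert (E: (x1*x1+x2*x2+x3*x3)*(y1*y1+y2*y2+y3*y3) - (x1*y1+x2*y2+x3*y3) * (x1*y1+x2*y2+x3*y3)
    = (x2*y3-x3*y2)*(x2*y3-x3*y2) + (x3*y1-x1*y3)*(x3*y1-x1*y3) + (x1*y2-x2*y1)*(x1*y2-x2*y1)) by ring.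
  pose proof (sqn (x2*y3-x3*y2)); pose proof (sqn (x3*y1-x1*y3)); pose proof (sqn (x1*y2-x2*y1)). lra.
Qed.

Lemma tri p q r : dot p p = 1 -> dot q q = 1 -> dot r r = 1 ->
  gdist p r <= gdist p q + gdist q r.
Proof.
  intros Hp Hq Hr. unfold gdist.
  pose proof (dot_bound p q Hp Hq); pose proof (dot_bound q r Hq Hr); pose proof (dot_bound p r Hp Hr).
  pose proof (acos_bound (dot p q)); pose proof (acos_bound (dot q r)); pose proof (acos_bound (dot p r)).
  destruct (Rle_or_lt (acos (dot p q) + acos (dot q r)) PI) as [HS|HS]; [|lra].
  apply acos_le_of_cos; [lra|lra|].
  rewrite cos_plus, !cos_acos, !sin_acos by lra.
  assert (CS: (dot p q * dot q r - dot p r) * (dot p q * dot q r - dot p r)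
     <= (1 - (dot p q)²) * (1 - (dot q r)²)).
  { destruct p as [[p1 p2] p3]; destruct q as [[q1 q2] q3]; destruct r as [[r1 r2] r3].
    simpl in *. unfold Rsqr.
    remember (p1*q1+p2*q2+p3*q3) as a. remember (q1*r1+q2*r2+q3*r3) as b.
    pose proof (cs3 (p1 - a*q1) (p2 - a*q2) (p3 - a*q3) (r1 - b*q1) (r2 - b*q2) (r3 - b*q3)) as C.
    assert (E1: (p1 - a*q1)*(r1 - b*q1) + (p2 - a*q2)*(r2 - b*q2) + (p3 - a*q3)*(r3 - b*q3)
      = (p1*r1+p2*r2+p3*r3) - a*(q1*r1+q2*r2+q3*r3) - b*(p1*q1+p2*q2+p3*q3) + a*b*(q1*q1+q2*q2+q3*q3)) by ring.
    assert (E2: (p1 - a*q1)*(p1 - a*q1) + (p2 - a*q2)*(p2 - a*q2) + (p3 - a*q3)*(p3 - a*q3)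
      = (p1*p1+p2*p2+p3*p3) - 2*a*(p1*q1+p2*q2+p3*q3) + a*a*(q1*q1+q2*q2+q3*q3)) by ring.
    assert (E3: (r1 - b*q1)*(r1 - b*q1) + (r2 - b*q2)*(r2 - b*q2) + (r3 - b*q3)*(r3 - b*q3)
      = (r1*r1+r2*r2+r3*r3) - 2*b*(q1*r1+q2*r2+q3*r3) + b*b*(q1*q1+q2*q2+q3*q3)) by ring.
    rewrite E1, E2, E3, Hp, Hq, Hr, <- Heqa, <- Heqb in C. 
    replace (a * b - (p1 * r1 + p2 * r2 + p3 * r3)) with (-((p1 * r1 + p2 * r2 + p3 * r3) - a*b - b*a + a*b*1)) by ring.
    nra. }
  rewrite <- sqrt_mult_alt.
  2:{ unfold Rsqr; nra. }
  assert (0 <= (1 - (dot p q)²) * (1 - (dot q r)²)) by (apply Rmult_le_pos; unfold Rsqr; nra).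
  pose proof (le_sqrt_of_sq _ _ H5 CS). lra.
Qed.

Lemma betw_real a b x : -1 <= x <= 1 -> 0 <= a -> 0 <= b -> a*a+b*b+2*a*b*x = 1 ->
  acos x = acos (a + b*x) + acos (a*x + b).
Proof.
  intros Hx Ha Hb E.
  assert (EA: 1 - (a + b*x)² = (b*b) * (1 - x*x)) by (unfold Rsqr; nra).
  assert (EB: 1 - (a*x + b)² = (a*a) * (1 - x*x)) by (unfold Rsqr; nra).
  assert (H1x: 0 <= 1 - x*x) by nra.
  assert (HA: -1 <= a + b*x <= 1).
  { pose proof (sqn b). pose proof (Rmult_le_pos _ _ (sqn b) H1x). unfold Rsqr in EA. split; nra. }
  assert (HB: -1 <= a*x + b <= 1).
  { pose proof (Rmult_le_pos _ _ (sqn a) H1x). unfold Rsqr in EB. split; nra. }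
  pose proof (acos_bound (a+b*x)); pose proof (acos_bound (a*x+b)).
  assert (Hs: acos (a + b*x) + acos (a*x+b) <= PI).
  { assert (acos (a + b*x) <= acos (- (a*x+b))) by (apply acos_dec; nra).
    rewrite acos_opp in H1. lra. }
  rewrite <- (acos_cos (acos (a + b*x) + acos (a*x+b))) by lra.
  f_equal. rewrite cos_plus, !cos_acos, !sin_acos by lra.
  rewrite EA, EB.
  rewrite (sqrt_mult_alt (b*b)) by apply sqn.
  rewrite (sqrt_mult_alt (a*a)) by apply sqn.
  rewrite !sqrt_square by lra.
  assert (sqrt (1 - x*x) * sqrt (1 - x*x) = 1 - x*x) by (apply sqrt_sqrt; lra).
  symmetry. transitivity ((a+b*x)*(a*x+b) - a*b*(sqrt (1 - x*x) * sqrt (1 - x*x))); [ring|].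
  rewrite H1. nra.
Qed.

Definition comb (a : R) (p : pt) (b : R) (z : pt) : pt :=
  let '(x1, y1, z1) := p in let '(x2, y2, z2) := z in (a*x1+b*x2, a*y1+b*y2, a*z1+b*z2).

Lemma betw p z a b : dot p p = 1 -> dot z z = 1 -> 0 <= a -> 0 <= b ->
  dot (comb a p b z) (comb a p b z) = 1 ->
  gdist p z = gdist p (comb a p b z) + gdist (comb a p b z) z.
Proof.
  intros Hp Hz Ha Hb Hq. unfold gdist.
  pose proof (dot_bound p z Hp Hz).
  destruct p as [[p1 p2] p3]; destruct z as [[z1 z2] z3]; simpl in *.
  replace (p1 * (a * p1 + b * z1) + p2 * (a * p2 + b * z2) + p3 * (a * p3 + b * z3))
    with (a * (p1*p1+p2*p2+p3*p3) + b * (p1*z1+p2*z2+p3*z3)) by ring.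
  replace ((a * p1 + b * z1) * z1 + (a * p2 + b * z2) * z2 + (a * p3 + b * z3) * z3)
    with (a * (p1*z1+p2*z2+p3*z3) + b * (z1*z1+z2*z2+z3*z3)) by ring.
  rewrite Hp, Hz, !Rmult_1_r.
  apply betw_real; auto.
  rewrite <- Hq. replace (a*a+b*b+2*a*b*(p1*z1+p2*z2+p3*z3)) with
    (a*a*(p1*p1+p2*p2+p3*p3)+b*b*(z1*z1+z2*z2+z3*z3)+2*a*b*(p1*z1+p2*z2+p3*z3)) by (rewrite Hp, Hz; ring).
  ring.
Qed.

Lemma betw_abs p q z : dot p p = 1 -> dot z z = 1 ->
  gdist p z = gdist p q + gdist q z -> Rabs (gdist p z - gdist q z) = gdist p q.
Proof.
  intros _ _ E. rewrite E. replace (gdist p q + gdist q z - gdist q z) with (gdist p q) by ring.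
  apply Rabs_right. pose proof (acos_bound (dot p q)). unfold gdist; lra.
Qed.

Lemma exz_pos p q : dot p p = 1 -> dot q q = 1 -> 0 < zc p -> 0 <= zc q ->
  exists z, dot z z = 1 /\ zc z = 0 /\ Rabs (gdist p z - gdist q z) = gdist p q.
Proof.
  intros Hp Hq Hp3 Hq3.
  destruct p as [[p1 p2] p3]; destruct q as [[q1 q2] q3]; simpl in *.
  set (w1 := p3*q1 - q3*p1). set (w2 := p3*q2 - q3*p2).
  set (N := w1*w1 + w2*w2).
  assert (HN: 0 <= N) by (pose proof (sqn w1); pose proof (sqn w2); unfold N; lra).
  destruct (Req_dec N 0) as [N0|Npos].
  - assert (w1 = 0) by (pose proof (sqn w1); pose proof (sqn w2); unfold N in N0; nra).
    assert (w2 = 0) by (pose proof (sqn w1); pose proof (sqn w2); unfold N in N0; nra).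
    exists (1,0,0). simpl. split; [ring|split; [ring|]].
    assert (E: (q1,q2,q3) = comb (q3/p3) (p1,p2,p3) 0 (1,0,0)).
    { simpl. unfold w1, w2 in *. f_equal; [f_equal|]; field_simplify; try lra; 
      apply Rmult_eq_reg_r with p3; try lra; field_simplify; lra. }
    rewrite E. apply betw_abs; [exact Hp| simpl; ring |].
    apply betw; try (simpl; lra).
    + apply Rle_mult_inv_pos; lra.
    + rewrite <- E. simpl. exact Hq.
  - assert (Hs: 0 < sqrt N) by (apply sqrt_lt_R0; lra).
    pose proof (sqrt_sqrt N HN) as SS.
    assert (HZ: w1 / sqrt N * (w1 / sqrt N) + w2 / sqrt N * (w2 / sqrt N) + 0 * 0 = 1).
    { remember (sqrt N) as s. replace (w1 / s * (w1 / s) + w2 / s * (w2 / s) + 0 * 0)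
        with (N / (s * s)) by (unfold N; field; lra).
      rewrite SS. field. lra. }
    exists (w1 / sqrt N, w2 / sqrt N, 0). simpl. split; [|split; [ring|]].
    { exact HZ. }
    assert (E: (q1,q2,q3) = comb (q3/p3) (p1,p2,p3) (sqrt N / p3) (w1 / sqrt N, w2 / sqrt N, 0)).
    { simpl. unfold w1, w2. f_equal; [f_equal|]; field; lra. }
    rewrite E. apply betw_abs.
    + exact Hp.
    + exact HZ.
    + apply betw.
      * exact Hp.
      * exact HZ.
      * apply Rle_mult_inv_pos; lra.
      * apply Rle_mult_inv_pos; lra.
      * rewrite <- E. simpl. exact Hq.
Qed.

Lemma exz p q : in_S2p p -> in_S2p q ->
  exists z, in_S1 z /\ Rabs (gdist p z - gdist q z) = gdist p q.
Proof.
  intros [Hp Hp3] [Hq Hq3].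
  destruct (Rle_lt_or_eq_dec _ _ Hp3) as [Pp|P0].
  - destruct (exz_pos p q Hp Hq Pp Hq3) as [z [Hz [Hz3 E]]]. exists z; split; [split|]; auto.
  - destruct (Rle_lt_or_eq_dec _ _ Hq3) as [Qp|Q0].
    + destruct (exz_pos q p Hq Hp Qp Hp3) as [z [Hz [Hz3 E]]]. exists z; split; [split|]; auto.
      rewrite Rabs_minus_sym, E. apply gdist_sym.
    + exists q. split; [split; auto|].
      unfold gdist at 2. rewrite Hq, acos_1, Rminus_0_r. apply Rabs_right.
      pose proof (acos_bound (dot p q)). unfold gdist; lra.
Qed.

Definition negp (x : pt) : pt := let '(a, b, c) := x in (-a, -b, -c).

Lemma negp_S1 x : in_S1 x -> in_S1 (negp x).
Proof. destruct x as [[a b] c]; unfold in_S1; simpl; intros [H1 H2]; split; [nra|lra]. Qed.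

Lemma dot_negp p x : dot p (negp x) = - dot p x.
Proof. destruct p as [[a b] c]; destruct x as [[d e] f]; simpl; ring. Qed.

Lemma part1 (p : S2p) : in_E (iota p).
Proof.
  destruct p as [p [Hp Hp3]]. unfold in_E, iota, dS1; simpl.
  split; [|split].
  - intros [x [Hx Hx']] [y [Hy Hy']]; simpl.
    pose proof (tri p y x Hp Hy Hx); pose proof (tri p x y Hp Hx Hy).
    rewrite (gdist_sym y x) in H. apply Rabs_le; lra.
  - intros [x [Hx Hx']] [y [Hy Hy']]; simpl.
    pose proof (tri x p y Hx Hp Hy). rewrite (gdist_sym x p) in H. lra.
  - intros [x Hx]. exists (exist _ (negp x) (negp_S1 x Hx)); simpl.
    unfold gdist. rewrite !dot_negp, acos_opp. destruct Hx as [Hx _]. rewrite Hx, acos_opp, acos_1. ring.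
Qed.

Lemma part2 (p q : S2p) : sup_dist (iota p) (iota q) (dS2p p q).
Proof.
  destruct p as [p Hp]; destruct q as [q Hq]. unfold sup_dist, iota, dS2p; simpl.
  split.
  - intros t [[x [Hx Hx']] ->]; simpl.
    destruct Hp as [Hp _]; destruct Hq as [Hq _].
    pose proof (tri p q x Hp Hq Hx); pose proof (tri q p x Hq Hp Hx).
    rewrite (gdist_sym q p) in H0. apply Rabs_le; lra.
  - intros M HM. destruct (exz p q Hp Hq) as [z [Hz E]].
    rewrite <- E. apply HM. exists (exist _ z Hz). reflexivity.
Qed.

Lemma lip_cont h x : (forall y, Rabs (h y - h x) <= 2 * Rabs (y - x)) -> continuity_pt h x.
Proof.
  intros H. unfold continuity_pt, continue_in, limit1_in, limit_in.
  intros eps Heps. exists (eps / 2). split; [lra|].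
  intros y [_ Hy]. simpl in *. unfold R_dist in *.
  pose proof (H y). lra.
Qed.

Lemma acos_cos_le t : acos (cos t) <= Rabs t.
Proof.
  destruct (Rle_or_lt (Rabs t) PI) as [H|H].
  - unfold Rabs in *. destruct (Rcase_abs t).
    + rewrite <- cos_neg, acos_cos; lra.
    + rewrite acos_cos; lra.
  - pose proof (acos_bound (cos t)). lra.
Qed.

Lemma cS1_in t : in_S1 (cos t, sin t, 0).
Proof. unfold in_S1; simpl. pose proof (sin2_cos2 t). unfold Rsqr in H. split; lra. Qed.

Definition cS1 (t : R) : S1 := exist _ (cos t, sin t, 0) (cS1_in t).

Lemma cS1_dist t t' : dS1 (cS1 t) (cS1 t') <= Rabs (t - t').
Proof.
  unfold dS1, gdist; simpl.
  replace (cos t * cos t' + sin t * sin t' + 0 * 0) with (cos (t - t')) by (rewrite cos_minus; ring).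
  apply acos_cos_le.
Qed.

Lemma S1_eq (x y : S1) : proj1_sig x = proj1_sig y -> x = y.
Proof.
  destruct x as [x Hx]; destruct y as [y Hy]; simpl. intros ->. f_equal. apply proof_irrelevance.
Qed.

Lemma cS1_surj (z : S1) : exists t, 0 <= t <= 2 * PI /\ cS1 t = z.
Proof.
  destruct z as [[[a b] c] [Hz Hc]]. simpl in Hz, Hc. subst c.
  assert (Ha: -1 <= a <= 1) by (pose proof (sqn b); split; nra).
  assert (Es: sqrt (1 - a²) = Rabs b).
  { rewrite <- sqrt_Rsqr_abs. f_equal. unfold Rsqr. lra. }
  pose proof (acos_bound a). pose proof PI_RGT_0.
  destruct (Rle_or_lt 0 b) as [Hb|Hb].
  - exists (acos a). split; [lra|]. apply S1_eq; simpl.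
    rewrite cos_acos, sin_acos, Es, Rabs_right by lra. reflexivity.
  - exists (2 * PI - acos a). split; [lra|]. apply S1_eq; simpl.
    rewrite cos_minus, sin_minus, cos_2PI, sin_2PI, cos_acos, sin_acos, Es, Rabs_left by lra.
    f_equal; f_equal; ring.
Qed.

Lemma attain (f g : S1 -> R) r :
  (forall x y, Rabs (f x - f y) <= dS1 x y) ->
  (forall x y, Rabs (g x - g y) <= dS1 x y) ->
  sup_dist f g r -> exists z, Rabs (f z - g z) = r.
Proof.
  intros Hf Hg [Hub Hlub].
  set (h := fun t => Rabs (f (cS1 t) - g (cS1 t))).
  assert (Hc: forall t, continuity_pt h t).
  { intros t. apply lip_cont. intros y. unfold h.
    pose proof (Hf (cS1 y) (cS1 t)); pose proof (Hg (cS1 y) (cS1 t)); pose proof (cS1_dist y t).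
    pose proof (Rabs_triang_inv (f (cS1 y) - g (cS1 y)) (f (cS1 t) - g (cS1 t))).
    pose proof (Rabs_triang_inv (f (cS1 t) - g (cS1 t)) (f (cS1 y) - g (cS1 y))).
    pose proof (Rabs_triang (f (cS1 y) - f (cS1 t)) (g (cS1 t) - g (cS1 y))).
    rewrite (Rabs_minus_sym (g (cS1 t))) in H4.
    replace (f (cS1 y) - f (cS1 t) + (g (cS1 t) - g (cS1 y))) with
      ((f (cS1 y) - g (cS1 y)) - (f (cS1 t) - g (cS1 t))) in H4 by ring.
    rewrite (Rabs_minus_sym (f (cS1 t) - g (cS1 t))) in H3.
    apply Rabs_le. split.
    - pose proof (Rabs_pos (f (cS1 y) - g (cS1 y) - (f (cS1 t) - g (cS1 t)))).
      assert (Rabs (f (cS1 t) - g (cS1 t)) - Rabs (f (cS1 y) - g (cS1 y)) <= 2 * Rabs (y - t)) by lra.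
      lra.
    - lra. }
  pose proof PI_RGT_0.
  destruct (continuity_ab_maj h 0 (2*PI) ltac:(lra) (fun c _ => Hc c)) as [M [HM HMr]].
  exists (cS1 M). apply Rle_antisym.
  - apply Hub. exists (cS1 M). reflexivity.
  - apply Hlub. intros t [x ->]. destruct (cS1_surj x) as [s [Hs <-]]. apply (HM s Hs).
Qed.

Lemma Rabs_le_inv x y : Rabs x <= y -> -y <= x <= y.
Proof. unfold Rabs; destruct (Rcase_abs x); intros; lra. Qed.

Lemma dS1_self (x : S1) : dS1 x x = 0.
Proof. destruct x as [x Hx]. unfold dS1, gdist; simpl. destruct Hx as [Hx _]. rewrite Hx. apply acos_1. Qed.

Lemma dS1_sym (x y : S1) : dS1 x y = dS1 y x.
Proof. unfold dS1. apply gdist_sym. Qed.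

Lemma E_bounds f x : in_E f -> 0 <= f x <= PI.
Proof.
  intros [H1 [H2 H3]].
  assert (P: forall y, 0 <= f y) by (intros y; pose proof (H2 y y); rewrite dS1_self in H; lra).
  split; auto. destruct (H3 x) as [y Hy]. pose proof (P y).
  pose proof (acos_bound (dot (proj1_sig x) (proj1_sig y))). unfold dS1, gdist in Hy. lra.
Qed.

Lemma E_zero f z : in_E f -> f z = 0 -> forall y, f y = dS1 z y.
Proof.
  intros [H1 [H2 H3]] Hz y. pose proof (H1 y z); pose proof (H2 z y). rewrite dS1_sym in H.
  apply Rabs_le_inv in H. lra.
Qed.

Lemma E_pi_pair f g : in_E f -> in_E g -> sup_dist f g PI -> exists w, forall y, f y = dS1 w y.
Proof.
  intros Hf Hg Hs.
  destruct (attain f g PI (proj1 Hf) (proj1 Hg) Hs) as [z Hz].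
  pose proof (E_bounds f z Hf); pose proof (E_bounds g z Hg).
  unfold Rabs in Hz. destruct (Rcase_abs (f z - g z)).
  - exists z. apply E_zero; auto. lra.
  - assert (f z = PI) by lra.
    destruct Hf as [F1 [F2 F3]]. destruct (F3 z) as [y Hy].
    pose proof (E_bounds f y (conj F1 (conj F2 F3))).
    pose proof (acos_bound (dot (proj1_sig z) (proj1_sig y))). unfold dS1, gdist in Hy.
    exists y. apply E_zero; [split; auto|]. lra.
Qed.

Lemma F1 f w : in_E f -> sup_dist f (fun y => dS1 w y) (f w).
Proof.
  intros Hf. pose proof (E_bounds f w Hf) as Bw. destruct Hf as [H1 [H2 H3]]. split.
  - intros t [x ->]. pose proof (H1 x w); pose proof (H2 w x). rewrite dS1_sym in H.
    apply Rabs_le_inv in H. apply Rabs_le. lra.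
  - intros M HM. apply HM. exists w. rewrite dS1_self, Rminus_0_r, Rabs_right by lra. reflexivity.
Qed.

Lemma embed_in (w : S1) : in_S2p (proj1_sig w).
Proof. destruct w as [w Hw]; simpl; destruct Hw as [H1 H2]; split; lra. Qed.

Definition embed (w : S1) : S2p := exist _ (proj1_sig w) (embed_in w).

Lemma Bp (phi : S2p -> S1 -> R) :
  (forall p, in_E (phi p)) -> (forall p q, sup_dist (phi p) (phi q) (dS2p p q)) ->
  forall p x w, (forall y, phi (embed x) y = dS1 w y) ->
  phi p w = gdist (proj1_sig p) (proj1_sig x).
Proof.
  intros HE Hiso p x w Hw.
  pose proof (Hiso p (embed x)) as S.
  replace (phi (embed x)) with (fun y => dS1 w y) in S by (apply functional_extensionality; intros; symmetry; auto).
  pose proof (F1 (phi p) w (HE p)) as S2.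
  exact (is_lub_u _ _ _ S2 S).
Qed.

Lemma step1 (phi : S2p -> S1 -> R) :
  (forall p, in_E (phi p)) -> (forall p q, sup_dist (phi p) (phi q) (dS2p p q)) ->
  forall x, exists w, forall y, phi (embed x) y = dS1 w y.
Proof.
  intros HE Hiso x.
  set (nx := exist _ (negp (proj1_sig x)) (negp_S1 _ (proj2_sig x)) : S1).
  pose proof (Hiso (embed x) (embed nx)) as S.
  replace (dS2p (embed x) (embed nx)) with PI in S.
  - apply (E_pi_pair _ _ (HE _) (HE _) S).
  - unfold dS2p, gdist, embed, nx; simpl. rewrite dot_negp.
    pose proof (proj1 (proj2_sig x)) as Hx. rewrite Hx, acos_opp, acos_1. ring.
Qed.

Lemma frame u1 u2 v1 v2 : u1*u1+u2*u2 = 1 -> v1*v1+v2*v2 = 1 -> v1*u1+v2*u2 = 0 ->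
  exists s, s*s = 1 /\ v1 = u2*s /\ v2 = -u1*s.
Proof.
  intros Hu Hv Huv. exists (u2*v1 - u1*v2).
  assert (I: (u1*v1+u2*v2)*(u1*v1+u2*v2) + (u2*v1 - u1*v2)*(u2*v1 - u1*v2) = (u1*u1+u2*u2)*(v1*v1+v2*v2)) by ring.
  rewrite Hu, Hv in I. split; [nra|split].
  - transitivity (v1*(u1*u1+u2*u2) - u1*(v1*u1+v2*u2)); [rewrite Hu, Huv; ring| ring].
  - transitivity (v2*(u1*u1+u2*u2) - u2*(v1*u1+v2*u2)); [rewrite Hu, Huv; ring| ring].
Qed.

Lemma e1_in : in_S1 (1,0,0). Proof. split; simpl; ring. Qed.
Lemma e2_in : in_S1 (0,1,0). Proof. split; simpl; ring. Qed.
Definition e1 : S1 := exist _ (1,0,0) e1_in.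
Definition e2 : S1 := exist _ (0,1,0) e2_in.

Lemma part3 (A : (S1 -> R) -> Prop) :
  (forall g, A g -> in_E g) -> isometric_to_S2p A ->
  forall g, A g <-> exists p : S2p, g = iota p.
Proof.
  intros HA [phi [Hin [Hsurj Hiso]]].
  assert (HE: forall p, in_E (phi p)) by (intros; apply HA, Hin).
  destruct (step1 phi HE Hiso e1) as [u Hu].
  destruct (step1 phi HE Hiso e2) as [v Hv].
  pose proof (Bp phi HE Hiso (embed e2) e1 u Hu) as Huv.
  rewrite Hv in Huv.
  destruct u as [[[u1 u2] u3] Hun]. pose proof Hun as [Hu1 Hu3]. simpl in Hu1, Hu3. subst u3.
  destruct v as [[[v1 v2] v3] Hvn]. pose proof Hvn as [Hv1 Hv3]. simpl in Hv1, Hv3. subst v3.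
  unfold dS1, gdist in Huv; simpl in Huv.
  apply acos_inj in Huv.
  2:{ pose proof (dot_bound (v1,v2,0) (u1,u2,0) Hv1 Hu1). simpl in H. exact H. }
  2:{ lra. }
  destruct (frame u1 u2 v1 v2 ltac:(lra) ltac:(lra) ltac:(lra)) as [s [Hs [Ev1 Ev2]]].
  assert (U: u1*u1+u2*u2 = 1) by (simpl in Hu1; lra).
  assert (KEY: forall p : S2p, forall p1 p2 p3, proj1_sig p = (p1,p2,p3) -> forall y : S1,
            phi p y = gdist (p1*u1+p2*v1, p1*u2+p2*v2, p3) (proj1_sig y)).
  { intros p p1 p2 p3 Ep y.
    destruct y as [[[y1 y2] y3] Hyn]. pose proof Hyn as [Hy1 Hy3]. simpl in Hy1, Hy3. subst y3.
    assert (Hx: in_S1 (y1*u1+y2*u2, y1*v1+y2*v2, 0)).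
    { split; simpl; [|reflexivity]. rewrite Ev1, Ev2.
      transitivity ((y1*y1+y2*y2)*(u1*u1+u2*u2) + (s*s-1)*((y1*u2-y2*u1)*(y1*u2-y2*u1))); [ring|].
      rewrite Hs. assert (Y: y1*y1+y2*y2 = 1) by (simpl in Hy1; lra). rewrite U, Y. ring. }
    set (x := exist _ _ Hx : S1).
    destruct (step1 phi HE Hiso x) as [w Hw].
    pose proof (Bp phi HE Hiso (embed e1) x w Hw) as W1.
    pose proof (Bp phi HE Hiso (embed e2) x w Hw) as W2.
    rewrite Hu in W1. rewrite Hv in W2.
    destruct w as [[[w1 w2] w3] Hwn]. pose proof Hwn as [Hw1 Hw3]. simpl in Hw1, Hw3. subst w3.
    unfold dS1, gdist in W1, W2; simpl in W1, W2.
    apply acos_inj in W1.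
    2:{ pose proof (dot_bound (u1,u2,0) (w1,w2,0) Hu1 Hw1). simpl in H. exact H. }
    2:{ pose proof (dot_bound (1,0,0) (y1*u1+y2*u2, y1*v1+y2*v2, 0) (proj1 e1_in) (proj1 Hx)). simpl in H. exact H. }
    apply acos_inj in W2.
    2:{ pose proof (dot_bound (v1,v2,0) (w1,w2,0) Hv1 Hw1). simpl in H. exact H. }
    2:{ pose proof (dot_bound (0,1,0) (y1*u1+y2*u2, y1*v1+y2*v2, 0) (proj1 e2_in) (proj1 Hx)). simpl in H. exact H. }
    assert (Ewy: w1 = y1 /\ w2 = y2).
    { rewrite Ev1, Ev2 in W2. simpl in Hu1.
      assert (W2': u2*w1 - u1*w2 = u2*y1 - u1*y2).
      { transitivity (s*s*(u2*w1 - u1*w2)); [rewrite Hs; ring|].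
        transitivity (s*s*(u2*y1 - u1*y2)); [|rewrite Hs; ring].
        transitivity (s*(u2 * s * w1 + - u1 * s * w2 + 0 * 0)); [ring|].
        rewrite W2. ring. }
      assert (W1': u1*w1 + u2*w2 = u1*y1 + u2*y2) by lra.
      split.
      - transitivity (w1*(u1*u1+u2*u2)); [rewrite U; ring|].
        transitivity (y1*(u1*u1+u2*u2)); [|rewrite U; ring].
        transitivity (u1*(u1*w1 + u2*w2) + u2*(u2*w1 - u1*w2)); [ring|].
        rewrite W1', W2'. ring.
      - transitivity (w2*(u1*u1+u2*u2)); [rewrite U; ring|].
        transitivity (y2*(u1*u1+u2*u2)); [|rewrite U; ring].
        transitivity (u2*(u1*w1 + u2*w2) - u1*(u2*w1 - u1*w2)); [ring|].
        rewrite W1', W2'. ring. }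
    destruct Ewy as [-> ->].

    transitivity (phi p (exist _ (y1,y2,0) Hwn)); [f_equal; apply S1_eq; reflexivity|].
    refine (eq_trans (Bp phi HE Hiso p x _ Hw) _). rewrite Ep. unfold gdist, x; simpl. f_equal. ring. }
  intros g. split.
  - intros Hg. destruct (Hsurj g Hg) as [p <-].
    destruct p as [[[p1 p2] p3] Hpn]. pose proof Hpn as [Hp1 Hp3]. simpl in Hp1, Hp3.
    assert (Ht: in_S2p (p1*u1+p2*v1, p1*u2+p2*v2, p3)).
    { split; simpl; [|lra]. rewrite Ev1, Ev2.
      transitivity ((p1*p1+p2*p2)*(u1*u1+u2*u2) + p3*p3 + (s*s-1)*(p2*p2*(u1*u1+u2*u2))); [ring|].
      rewrite Hs, U. simpl in Hp1. lra. }
    exists (exist _ _ Ht). apply functional_extensionality. intros y.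
    apply (KEY (exist _ (p1,p2,p3) Hpn) p1 p2 p3 eq_refl y).
  - intros [[[[q1 q2] q3] Hqn] ->]. pose proof Hqn as [Hq1 Hq3]. simpl in Hq1, Hq3.
    simpl in Hu1.
    set (p1 := q1*u1+q2*u2). set (p2 := q1*v1+q2*v2).
    assert (Hp: in_S2p (p1, p2, q3)).
    { split; simpl; [|lra]. unfold p1, p2. rewrite Ev1, Ev2.
      transitivity ((q1*q1+q2*q2)*(u1*u1+u2*u2) + q3*q3 + (s*s-1)*((q1*u2-q2*u1)*(q1*u2-q2*u1))); [ring|].
      rewrite Hs, U. lra. }
    cut (phi (exist _ _ Hp) = iota (exist _ (q1,q2,q3) Hqn)); [intros EQ; exact (eq_ind _ A (Hin _) _ EQ)|].
    apply functional_extensionality. intros y. rewrite (KEY (exist _ (p1,p2,q3) Hp) p1 p2 q3 eq_refl y).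
    unfold iota; simpl. f_equal.
    replace (p1 * u1 + p2 * v1) with q1.
    2:{ unfold p1, p2. rewrite Ev1, Ev2.
        transitivity (q1*(u1*u1+u2*u2) + (s*s-1)*(q1*u2*u2 - q2*u1*u2)); [rewrite U, Hs; ring|ring]. }
    replace (p1 * u2 + p2 * v2) with q2.
    2:{ unfold p1, p2. rewrite Ev1, Ev2.
        transitivity (q2*(u1*u1+u2*u2) + (s*s-1)*(q2*u1*u1 - q1*u1*u2)); [rewrite U, Hs; ring|ring]. }
    reflexivity.
Qed.

Theorem lemma2p9 :
  (* iota is an isometric embedding of S^2_+ into E(S^1) *)
  (forall p : S2p, in_E (iota p)) /\
  (forall p q : S2p, sup_dist (iota p) (iota q) (dS2p p q)) /\
  (* iota(S^2_+) is the only subset of E(S^1) isometric to S^2_+ *)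
  (forall A : (S1 -> R) -> Prop,
     (forall g, A g -> in_E g) ->
     isometric_to_S2p A ->
     forall g, A g <-> exists p : S2p, g = iota p).
Proof.
  split; [exact part1|split; [exact part2|exact part3]].
Qed.
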